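(* Let $f^*:[0,1]\to\mathbb{R}$ be any function, let $S=\{(x_i,y_i)\}_{i=1}^n$ with $0<x_1<x_2<\dots<x_n<1$, and let $\hat f_S$ be the minimum-norm interpolating two-layer ReLU network for $S$ (defined in the context). Then for any $i\in\{2,\dots,n-2\}$ and $x\in[x_i,x_{i+1})$, \[ |\hat f_S(x)-f^*(x)|\le\max\left\{|g_i(x)-f^*(x)|,\ \min\{|g_{i+1}(x)-f^*(x)|,|g_{i-1}(x)-f^*(x)|\}\right\}; \] for $x\in[0,x_2)$, $|\hat f_S(x)-f^*(x)|=|g_1(x)-f^*(x)|$; and for $x\in[x_{n-1},1]$, $|\hat f_S(x)-f^*(x)|=|g_{n-1}(x)-f^*(x)|$.
   Context: A two-layer ReLU network with skip connection is $f_{\theta,a_0,b_0}(x)=\sum_{j=1}^m a_j(w_jx+b_j)_++a_0x+b_0$ with $\theta=\{a_j,w_j,b_j\}_{j=1}^m\in\mathbb{R}^{3m}$ and arbitrary width $m$. The min-norm interpolator $\hat f_S$ is the (unique) minimizer of $\|\theta\|_2^2$ over all $m,\theta,a_0,b_0$ subject to $f_{\theta,a_0,b_0}(x_i)=y_i$ for all $i\in[n]$ (the weights $a_0,b_0$ are not penalized). For $i\in[n-1]$, $g_i$ denotes the affine function through $(x_i,y_i)$ and $(x_{i+1},y_{i+1})$. *)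

(* Defs.v *)
From Stdlib Require Import Reals Lra List.
Open Scope R_scope.

Definition relu (z : R) : R := Rmax 0 z.

(* A two-layer ReLU network with skip connection.  The hidden layer is a list
   of neurons (a_j, w_j, b_j); its length is the (arbitrary) width m. *)
Definition neurons := list (R * R * R).

Definition net (th : neurons) (a0 b0 : R) (x : R) : R :=
  fold_right (fun (p : R * R * R) acc =>
                let '(a, w, b) := p in a * relu (w * x + b) + acc) 0 th
  + a0 * x + b0.

Definition sqnorm (th : neurons) : R :=
  fold_right (fun (p : R * R * R) acc =>
                let '(a, w, b) := p in a ^ 2 + w ^ 2 + b ^ 2 + acc) 0 th.

Definition interpolates (n : nat) (xs ys : nat -> R) (th : neurons) (a0 b0 : R) : Prop :=
  forall i : nat, (1 <= i <= n)%nat -> net th a0 b0 (xs i) = ys i.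

Definition min_norm_interpolant (n : nat) (xs ys : nat -> R)
  (th : neurons) (a0 b0 : R) : Prop :=
  interpolates n xs ys th a0 b0 /\
  forall (th' : neurons) (a0' b0' : R),
    interpolates n xs ys th' a0' b0' -> sqnorm th <= sqnorm th'.

Definition gseg (xs ys : nat -> R) (i : nat) (x : R) : R :=
  ys i + (ys (S i) - ys i) / (xs (S i) - xs i) * (x - xs i).

(* Main.v *)
Require Import Defs.
From Stdlib Require Import Reals Lra List Psatz Classical Arith.
Open Scope R_scope.


Definition wt (t : R) : R := sqrt (1 + t*t).

Lemma wt_pos t : 0 < wt t.
Proof. unfold wt. apply sqrt_lt_R0. nra. Qed.

Lemma wt_sq t : wt t * wt t = 1 + t*t.
Proof. unfold wt. apply sqrt_sqrt. nra. Qed.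

Lemma wt_gt t : t < wt t.
Proof. pose proof (wt_pos t); pose proof (wt_sq t). nra. Qed.

Lemma wt_mono s t : 0 <= s -> s <= t -> wt s <= wt t.
Proof. intros. unfold wt. apply sqrt_le_1_alt. nra. Qed.

Lemma sqnn a : 0 <= a*a.
Proof. pose proof (Rle_0_sqr a). unfold Rsqr in H. lra. Qed.

Lemma wt_cs s t : 1 + s*t <= wt s * wt t.
Proof.
  pose proof (wt_pos s); pose proof (wt_pos t); pose proof (wt_sq s); pose proof (wt_sq t).
  assert (H3: (wt s * wt t) * (wt s * wt t) = (1 + s*s)*(1+t*t)) by (rewrite <- H1, <- H2; ring).
  assert (0 < wt s * wt t) by nra.
  destruct (Rle_dec (1 + s*t) (wt s * wt t)); auto.
  exfalso. apply Rnot_le_lt in n. assert ((1+s*t)*(1+s*t) > (wt s * wt t)*(wt s * wt t)) by nra.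
  pose proof (sqnn (s-t)). nra.
Qed.

Lemma wt_cs_strict s t : s <> t -> 1 + s*t < wt s * wt t.
Proof.
  intro Hst.
  pose proof (wt_pos s); pose proof (wt_pos t); pose proof (wt_sq s); pose proof (wt_sq t).
  assert (H3: (wt s * wt t) * (wt s * wt t) = (1 + s*s)*(1+t*t)) by (rewrite <- H1, <- H2; ring).
  assert (0 < wt s * wt t) by nra.
  assert (0 < (s-t)*(s-t)) by (assert (s - t <> 0) by lra; pose proof (Rsqr_pos_lt (s-t) H5); unfold Rsqr in *; lra).
  destruct (Rlt_dec (1 + s*t) (wt s * wt t)); auto.
  exfalso. apply Rnot_lt_le in n. assert ((1+s*t)*(1+s*t) >= (wt s * wt t)*(wt s * wt t)) by nra.
  nra.
Qed.

Lemma relu_pos z : 0 <= z -> relu z = z.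
Proof. intro; unfold relu; apply Rmax_right; auto. Qed.
Lemma relu_neg z : z <= 0 -> relu z = 0.
Proof. intro; unfold relu; apply Rmax_left; auto. Qed.
Lemma relu_ge0 z : 0 <= relu z.
Proof. unfold relu; apply Rmax_l. Qed.
Lemma relu_scale k y : 0 <= k -> relu (k*y) = k * relu y.
Proof. intro. destruct (Rle_dec 0 y).
  - rewrite !relu_pos; nra.
  - rewrite !relu_neg; nra.
Qed.
Lemma relu_opp y : relu (-y) = relu y - y.
Proof. destruct (Rle_dec 0 y).
  - rewrite relu_neg by lra. rewrite relu_pos by lra. ring.
  - rewrite relu_pos by lra. rewrite relu_neg by lra. ring.
Qed.

Definition atom := (R * R)%type.
Definition ev (l : list atom) (x : R) : R :=
  fold_right (fun p acc => fst p * relu (x - snd p) + acc) 0 l.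
Definition cost (l : list atom) : R :=
  fold_right (fun p acc => Rabs (fst p) * wt (snd p) + acc) 0 l.
Definition S0 (l : list atom) : R := fold_right (fun p acc => fst p + acc) 0 l.
Definition S1 (l : list atom) : R := fold_right (fun p acc => fst p * snd p + acc) 0 l.
Definition Fv l (al be x : R) := ev l x + al * x + be.

Lemma ev_app l1 l2 x : ev (l1 ++ l2) x = ev l1 x + ev l2 x.
Proof. induction l1; simpl; [ring|rewrite IHl1; ring]. Qed.
Lemma cost_app l1 l2 : cost (l1 ++ l2) = cost l1 + cost l2.
Proof. induction l1; simpl; [ring|rewrite IHl1; ring]. Qed.
Lemma cost_ge0 l : 0 <= cost l.
Proof. induction l; simpl. lra. pose proof (Rabs_pos (fst a)); pose proof (wt_pos (snd a)); nra. Qed.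

Lemma ev_filter (f : atom -> bool) l x :
  ev l x = ev (filter f l) x + ev (filter (fun p => negb (f p)) l) x.
Proof. induction l; simpl. ring. destruct (f a); simpl; rewrite IHl; ring. Qed.
Lemma cost_filter (f : atom -> bool) l :
  cost l = cost (filter f l) + cost (filter (fun p => negb (f p)) l).
Proof. induction l; simpl. ring. destruct (f a); simpl; rewrite IHl; ring. Qed.

Definition interp (n : nat) (xs ys : nat -> R) l al be :=
  forall i, (1 <= i <= n)%nat -> Fv l al be (xs i) = ys i.
Definition opt n xs ys l al be :=
  interp n xs ys l al be /\
  forall l' al' be', interp n xs ys l' al' be' -> cost l <= cost l'.

Lemma improve n xs ys l al be Q Rl N da db :
  opt n xs ys l al be ->
  (forall x, ev l x = ev Q x + ev Rl x) -> cost l = cost Q + cost Rl ->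
  (forall i, (1 <= i <= n)%nat -> ev N (xs i) + da * xs i + db = ev Q (xs i)) ->
  cost N < cost Q -> False.
Proof.
  intros [Hi Ho] He Hc Hd Hlt.
  assert (interp n xs ys (Rl ++ N) (al + da) (be + db)).
  { intros i Hi'. rewrite <- (Hi i Hi'). unfold Fv. rewrite ev_app, He.
    rewrite <- (Hd i Hi'). ring. }
  specialize (Ho _ _ _ H). rewrite cost_app, Hc in Ho. lra.
Qed.

Lemma improve_filter n xs ys l al be (f : atom -> bool) N da db :
  opt n xs ys l al be ->
  (forall i, (1 <= i <= n)%nat -> ev N (xs i) + da * xs i + db = ev (filter f l) (xs i)) ->
  cost N < cost (filter f l) -> False.
Proof.
  intros. eapply improve; eauto. intro; apply ev_filter. apply cost_filter.
Qed.

Lemma improve_split n xs ys l1 p l2 al be N da db :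
  opt n xs ys (l1 ++ p :: l2) al be ->
  (forall i, (1 <= i <= n)%nat -> ev N (xs i) + da * xs i + db = fst p * relu (xs i - snd p)) ->
  cost N < Rabs (fst p) * wt (snd p) -> False.
Proof.
  intros H Hd Hc. apply (improve n xs ys _ _ _ (p :: nil) (l1 ++ l2) N da db H).
  - intro. rewrite !ev_app. simpl. ring.
  - rewrite !cost_app. simpl. ring.
  - intros. rewrite Hd; auto. simpl. ring.
  - simpl. lra.
Qed.

Definition inw (a b : R) (p : atom) : bool :=
  if Rle_dec a (snd p) then (if Rle_dec (snd p) b then true else false) else false.
Lemma inw_spec a b p : inw a b p = true <-> a <= snd p <= b.
Proof. unfold inw. destruct (Rle_dec a (snd p)); destruct (Rle_dec (snd p) b); split; intros; try lra; try discriminate; auto. Qed.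

Lemma ev_win_left Q a x : (forall p, In p Q -> a <= snd p) -> x <= a -> ev Q x = 0.
Proof. induction Q; intros H Hx; simpl. auto.
  assert (H1 := H a0 (or_introl eq_refl)).
  rewrite IHQ; [| intros; apply H; right; auto | auto].
  rewrite relu_neg by lra. ring. Qed.
Lemma ev_win_right Q b x : (forall p, In p Q -> snd p <= b) -> b <= x -> ev Q x = S0 Q * x - S1 Q.
Proof. induction Q; intros H Hx; simpl. ring.
  assert (H1 := H a (or_introl eq_refl)).
  rewrite IHQ; [| intros; apply H; right; auto | auto].
  rewrite relu_pos by lra. ring. Qed.

Definition Gap (p0 q0 : R) (Q : list atom) : R :=
  fold_right (fun p acc => Rabs (fst p) * (wt (snd p) - Rabs (p0 + q0 * snd p)) + acc) 0 Q.

Lemma phi_gap p0 q0 Q :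
  (forall p, In p Q -> Rabs (p0 + q0 * snd p) <= wt (snd p)) ->
  Rabs (p0 * S0 Q + q0 * S1 Q) + Gap p0 q0 Q <= cost Q /\ 0 <= Gap p0 q0 Q.
Proof.
  induction Q as [|[c t] Q IH]; intros H; simpl.
  - replace (p0 * 0 + q0 * 0) with 0 by ring. rewrite Rabs_R0. lra.
  - destruct IH as [IH1 IH2]. intros; apply H; right; auto.
    assert (Ht := H (c,t) (or_introl eq_refl)). simpl in Ht.
    replace (p0 * (c + S0 Q) + q0 * (c * t + S1 Q)) with (c * (p0 + q0*t) + (p0 * S0 Q + q0 * S1 Q)) by ring.
    pose proof (Rabs_triang (c * (p0 + q0*t)) (p0 * S0 Q + q0 * S1 Q)).
    rewrite Rabs_mult in H0. pose proof (Rabs_pos c).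
    split. nra. nra.
Qed.

Lemma Gap_mem p0 q0 Q c t :
  (forall p, In p Q -> Rabs (p0 + q0 * snd p) <= wt (snd p)) ->
  In (c,t) Q -> Rabs c * (wt t - Rabs (p0 + q0 * t)) <= Gap p0 q0 Q.
Proof.
  induction Q as [|[c' t'] Q IH]; intros H Hin; simpl in *. contradiction.
  assert (HQ: forall p, In p Q -> Rabs (p0 + q0 * snd p) <= wt (snd p)) by (intros; apply H; auto).
  pose proof (proj2 (phi_gap p0 q0 Q HQ)).
  assert (Ht := H (c',t') (or_introl eq_refl)). simpl in Ht.
  pose proof (Rabs_pos c').
  destruct Hin as [E|Hin].
  - inversion E; subst. nra.
  - specialize (IH HQ Hin). nra.
Qed.

Lemma phi_bound p0 q0 Q :
  (forall p, In p Q -> Rabs (p0 + q0 * snd p) <= wt (snd p)) ->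
  Rabs (p0 * S0 Q + q0 * S1 Q) <= cost Q.
Proof. intro H. destruct (phi_gap p0 q0 Q H). lra. Qed.

Lemma phi_strict p0 q0 Q c t :
  (forall p, In p Q -> Rabs (p0 + q0 * snd p) <= wt (snd p)) ->
  In (c,t) Q -> c <> 0 -> Rabs (p0 + q0 * t) < wt t ->
  Rabs (p0 * S0 Q + q0 * S1 Q) < cost Q.
Proof. intros H Hin Hc Hlt. destruct (phi_gap p0 q0 Q H).
  pose proof (Gap_mem p0 q0 Q c t H Hin).
  assert (0 < Rabs c) by (apply Rabs_pos_lt; auto). nra. Qed.


Lemma xs_lt n (xs : nat -> R) : (forall i, (1 <= i < n)%nat -> xs i < xs (S i)) ->
  forall j k, (1 <= j)%nat -> (j < k)%nat -> (k <= n)%nat -> xs j < xs k.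
Proof. intros H j k Hj Hjk Hk. induction k. lia.
  destruct (Nat.eq_dec j k). subst; apply H; lia.
  apply Rlt_trans with (xs k). apply IHk; lia. apply H; lia. Qed.

Lemma xs_le n (xs : nat -> R) : (forall i, (1 <= i < n)%nat -> xs i < xs (S i)) ->
  forall j k, (1 <= j)%nat -> (j <= k)%nat -> (k <= n)%nat -> xs j <= xs k.
Proof. intros H j k Hj Hjk Hk. destruct (Nat.eq_dec j k). subst; lra.
  left. apply (xs_lt n); auto; lia. Qed.

Lemma div_bounds X d W : 0 < d -> -(d*W) <= X <= d*W -> Rabs (X/d) <= W.
Proof. intros. apply Rabs_le. assert (X/d*d = X) by (field; lra). split; nra. Qed.
Lemma div_bounds_lt X d W : 0 < d -> -(d*W) < X < d*W -> Rabs (X/d) < W.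
Proof. intros. assert (X/d*d = X) by (field; lra). apply Rabs_def1; nra. Qed.

Lemma L1 a b t : 0 < a -> a <= t <= b -> (b-t)*wt a - (t-a)*wt b <= (b-a)*wt t.
Proof. intros. pose proof (wt_mono a t ltac:(lra) ltac:(lra)). pose proof (wt_pos b). pose proof (wt_pos a). pose proof (wt_pos t). nra. Qed.
Lemma L1s a b t : 0 < a -> a < t <= b -> (b-t)*wt a - (t-a)*wt b < (b-a)*wt t.
Proof. intros. pose proof (wt_mono a t ltac:(lra) ltac:(lra)). pose proof (wt_pos b). pose proof (wt_pos a). pose proof (wt_pos t). nra. Qed.
Lemma L2 a b t : 0 < a -> a <= t <= b -> (t-a)*wt b - (b-t)*wt a <= (b-a)*wt t.
Proof. intros. pose proof (wt_cs t b). pose proof (wt_pos b). pose proof (wt_pos a). pose proof (wt_pos t).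
  pose proof (wt_sq b) as Wb.
  assert ((t-a)*(1+b*b) - (b-t)*wt a*wt b <= (b-a)*(wt t*wt b)).
  { assert ((b-a)*(1+t*b) <= (b-a)*(wt t*wt b)) by nra.
    assert (0 <= (b-t)*(1 + a*b + wt a*wt b)) by (apply Rmult_le_pos; nra). lra. }
  assert (Ew: (t-a)*wt b*wt b = (t-a)*(1+b*b)) by (rewrite Rmult_assoc, Wb; ring).
  assert ((t-a)*wt b*wt b - (b-t)*wt a*wt b <= (b-a)*wt t*wt b) by lra.
  assert (((t-a)*wt b - (b-t)*wt a - (b-a)*wt t) * wt b <= 0) by lra.
  nra. Qed.
Lemma L2s a b t : 0 < a -> a <= t < b -> (t-a)*wt b - (b-t)*wt a < (b-a)*wt t.
Proof. intros. pose proof (wt_cs t b). pose proof (wt_pos b). pose proof (wt_pos a). pose proof (wt_pos t).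
  pose proof (wt_sq b) as Wb.
  assert ((t-a)*(1+b*b) - (b-t)*wt a*wt b < (b-a)*(wt t*wt b)).
  { assert ((b-a)*(1+t*b) <= (b-a)*(wt t*wt b)) by nra.
    assert (0 < (b-t)*(1 + a*b + wt a*wt b)) by (apply Rmult_lt_0_compat; nra). lra. }
  assert (Ew: (t-a)*wt b*wt b = (t-a)*(1+b*b)) by (rewrite Rmult_assoc, Wb; ring).
  assert ((t-a)*wt b*wt b - (b-t)*wt a*wt b < (b-a)*wt t*wt b) by lra.
  assert (((t-a)*wt b - (b-t)*wt a - (b-a)*wt t) * wt b < 0) by lra.
  nra. Qed.

Definition p0A a b := (b*wt a + a*wt b)/(b-a).
Definition q0A a b := -(wt a + wt b)/(b-a).
Lemma phiA_eq a b t : a < b -> p0A a b + q0A a b * t = ((b-t)*wt a - (t-a)*wt b)/(b-a).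
Proof. intros. unfold p0A, q0A. field. lra. Qed.
Lemma phiA_le a b t : 0 < a -> a < b -> a <= t <= b -> Rabs (p0A a b + q0A a b * t) <= wt t.
Proof. intros. rewrite phiA_eq by lra. apply div_bounds. lra.
  pose proof (L1 a b t). pose proof (L2 a b t). split; lra. Qed.
Lemma phiA_lt a b t : 0 < a -> a < b -> a < t < b -> Rabs (p0A a b + q0A a b * t) < wt t.
Proof. intros. rewrite phiA_eq by lra. apply div_bounds_lt. lra.
  pose proof (L1s a b t). pose proof (L2s a b t). split; lra. Qed.

Lemma abs_opp_sum A B u v : A*B <= 0 -> 0 <= u -> 0 <= v -> Rabs (A*u - B*v) = Rabs A * u + Rabs B * v.
Proof. intros. destruct (Rle_dec 0 A); destruct (Rle_dec 0 B).
  - assert (A = 0 \/ B = 0) by (destruct (Req_dec A 0); [left;auto|right; nra]).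
    destruct H2; subst; rewrite ?Rabs_R0, ?Rmult_0_l, ?Rminus_0_l, ?Rminus_0_r, ?Rabs_Ropp, ?Rabs_mult;
      rewrite ?(Rabs_pos_eq u), ?(Rabs_pos_eq v) by lra; ring.
  - rewrite (Rabs_pos_eq A) by lra. rewrite (Rabs_left B) by lra. rewrite Rabs_pos_eq by nra. ring.
  - rewrite (Rabs_pos_eq B) by lra. rewrite (Rabs_left A) by lra. rewrite Rabs_left1 by nra. ring.
  - nra.
Qed.

Definition p0B ts := 1 / wt ts.
Definition q0B ts := ts / wt ts.
Lemma phiB_le ts t : 0 <= ts -> 0 <= t -> Rabs (p0B ts + q0B ts * t) <= wt t.
Proof. intros. unfold p0B, q0B. pose proof (wt_pos ts). pose proof (wt_cs ts t). pose proof (wt_pos t).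
  replace (1 / wt ts + ts / wt ts * t) with ((1 + ts*t)/wt ts) by (field; lra).
  apply div_bounds. auto. split; nra. Qed.
Lemma phiB_lt ts t : 0 <= ts -> 0 <= t -> t <> ts -> Rabs (p0B ts + q0B ts * t) < wt t.
Proof. intros. unfold p0B, q0B. pose proof (wt_pos ts). pose proof (wt_cs_strict ts t). pose proof (wt_pos t).
  replace (1 / wt ts + ts / wt ts * t) with ((1 + ts*t)/wt ts) by (field; lra).
  apply div_bounds_lt. auto. assert (ts <> t) by auto. specialize (H3 H5). split; nra. Qed.

Section W1sec.
Variables (n : nat) (xs ys : nat -> R).
Hypothesis Hinc : forall i, (1 <= i < n)%nat -> xs i < xs (S i).
Hypothesis Hx1 : 0 < xs 1%nat.

Lemma xs_pos j : (1 <= j <= n)%nat -> 0 < xs j.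
Proof. intros. destruct (Nat.eq_dec j 1). subst; auto.
  apply Rlt_trans with (xs 1%nat); auto. apply (xs_lt n); auto; lia. Qed.

Lemma data_split j i : (1 <= j)%nat -> (j < n)%nat -> (1 <= i <= n)%nat -> xs i <= xs j \/ xs (S j) <= xs i.
Proof. intros. destruct (le_lt_dec i j).
  left. apply (xs_le n); auto; lia. right. apply (xs_le n); auto; lia. Qed.

Lemma W1 l al be j c0 t0 :
  opt n xs ys l al be -> (1 <= j)%nat -> (j < n)%nat ->
  In (c0,t0) l -> c0 <> 0 -> xs j < t0 < xs (S j) ->
  forall c t, In (c,t) l -> c <> 0 -> xs j <= t <= xs (S j) -> t = t0.
Proof.
  intros Hopt Hj Hjn Hin0 Hc0 Ht0.
  assert (Ha : 0 < xs j) by (apply xs_pos; lia).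
  assert (Hab : xs j < xs (S j)) by (apply Hinc; lia).
  set (a := xs j) in *. set (b := xs (S j)) in *.
  set (Q := filter (inw a b) l).
  assert (HQ: forall p, In p Q -> a <= snd p <= b)
    by (intros p Hp; apply filter_In in Hp; apply inw_spec; tauto).
  assert (HinQ: forall c t, In (c,t) l -> a <= t <= b -> In (c,t) Q)
    by (intros; apply filter_In; split; auto; apply inw_spec; auto).
  assert (HQa : forall p, In p Q -> a <= snd p) by (intros; apply HQ; auto).
  assert (HQb : forall p, In p Q -> snd p <= b) by (intros; apply HQ; auto).
  assert (Hdata : forall i, (1 <= i <= n)%nat -> xs i <= a \/ b <= xs i)
    by (intros; apply data_split; auto).
  set (s0 := S0 Q). set (s1 := S1 Q).
  set (A := (b*s0 - s1)/(b-a)). set (B := (s1 - a*s0)/(b-a)).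
  destruct (Rle_dec (A*B) 0) as [HAB|HAB].
  - exfalso. apply (improve_filter n xs ys l al be (inw a b) ((A,a)::(B,b)::nil) 0 0 Hopt).
    + intros i Hi. simpl. destruct (Hdata i Hi).
      * rewrite (ev_win_left Q a) by auto. rewrite !relu_neg by lra. ring.
      * rewrite (ev_win_right Q b) by auto. rewrite !relu_pos by lra. fold s0 s1. unfold A, B. field. lra.
    + simpl. pose proof (phi_strict (p0A a b) (q0A a b) Q c0 t0).
      assert (Hq: forall p, In p Q -> Rabs (p0A a b + q0A a b * snd p) <= wt (snd p))
        by (intros; apply phiA_le; auto).
      specialize (H Hq (HinQ _ _ Hin0 ltac:(lra)) Hc0 (phiA_lt a b t0 Ha Hab Ht0)).
      replace (p0A a b * S0 Q + q0A a b * S1 Q) with (A * wt a - B * wt b) in H.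
      2:{ fold s0 s1. unfold A, B, p0A, q0A. field. lra. }
      rewrite abs_opp_sum in H; auto; try (left; apply wt_pos). fold Q. lra.
  - apply Rnot_le_lt in HAB.
    assert (Hs0 : s0 = A + B) by (unfold A, B; field; lra).
    assert (Hs0n : s0 <> 0) by (intro E; rewrite E in Hs0; nra).
    set (ts := s1/s0).
    assert (Hts1 : ts - a = (b-a) * (B / s0)) by (unfold ts, B; field; lra).
    assert (Hts2 : b - ts = (b-a) * (A / s0)) by (unfold ts, A; field; lra).
    assert (HB : 0 < B / s0).
    { rewrite Hs0. destruct (Rlt_dec 0 B).
      - assert (0 < A) by nra. apply Rdiv_lt_0_compat; lra.
      - assert (B < 0) by (destruct (Req_dec B 0); [subst; nra | lra]). assert (A < 0) by nra.
        replace (B / (A+B)) with ((-B)/(-(A+B))) by (field; lra). apply Rdiv_lt_0_compat; lra. }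
    assert (HA : 0 < A / s0).
    { rewrite Hs0. destruct (Rlt_dec 0 A).
      - assert (0 < B) by nra. apply Rdiv_lt_0_compat; lra.
      - assert (A < 0) by (destruct (Req_dec A 0); [subst; nra | lra]). assert (B < 0) by nra.
        replace (A / (A+B)) with ((-A)/(-(A+B))) by (field; lra). apply Rdiv_lt_0_compat; lra. }
    assert (Hats : a < ts < b) by (split; nra).
    assert (Hall : forall c t, In (c,t) l -> c <> 0 -> a <= t <= b -> t = ts).
    { intros c t Hin Hc Ht. apply NNPP. intro Hne.
      apply (improve_filter n xs ys l al be (inw a b) ((s0,ts)::nil) 0 0 Hopt).
      + intros i Hi. simpl. destruct (Hdata i Hi).
        * rewrite (ev_win_left Q a) by auto. rewrite !relu_neg by lra. ring.
        * rewrite (ev_win_right Q b) by auto. rewrite !relu_pos by lra. fold s0 s1. unfold ts. field. auto.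
      + simpl. pose proof (phi_strict (p0B ts) (q0B ts) Q c t).
        assert (Hq: forall p, In p Q -> Rabs (p0B ts + q0B ts * snd p) <= wt (snd p))
          by (intros p Hp; apply phiB_le; [lra| pose proof (HQa p Hp); lra]).
        specialize (H Hq (HinQ _ _ Hin Ht) Hc (phiB_lt ts t ltac:(lra) ltac:(lra) Hne)).
        replace (p0B ts * S0 Q + q0B ts * S1 Q) with (s0 * wt ts) in H.
        2:{ fold s0 s1. unfold p0B, q0B. pose proof (wt_pos ts). pose proof (wt_sq ts).
            assert (s1 = ts * s0) by (unfold ts; field; auto). rewrite H2.
            replace (1 / wt ts * s0 + ts / wt ts * (ts * s0)) with (s0 * (1 + ts*ts) / wt ts) by (field; lra).
            rewrite <- H1. field. lra. }
        rewrite Rabs_mult, (Rabs_pos_eq (wt ts)) in H by (left; apply wt_pos). fold Q. lra. }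
    intros c t Hin Hc Ht. rewrite (Hall c t Hin Hc Ht). symmetry. apply (Hall c0 t0 Hin0 Hc0). lra.
Qed.
End W1sec.


Definition sat (t : R) (l : list atom) : R :=
  fold_right (fun p acc => (if Req_EM_T (snd p) t then fst p else 0) + acc) 0 l.

Lemma sat_filter a b t l : a <= t <= b -> sat t (filter (inw a b) l) = sat t l.
Proof. intro H. induction l as [|[c s] l IH]; simpl. auto.
  destruct (inw a b (c,s)) eqn:E; simpl; rewrite IH; auto.
  destruct (Req_EM_T s t). subst. exfalso.
  assert (inw a b (c,t) = true) by (apply inw_spec; simpl; auto). congruence. ring.
Qed.

Lemma two_point Q t1 t2 : t1 <> t2 ->
  (forall c t, In (c,t) Q -> c <> 0 -> t = t1 \/ t = t2) ->
  (forall x, ev Q x = sat t1 Q * relu (x - t1) + sat t2 Q * relu (x - t2)) /\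
  Rabs (sat t1 Q) * wt t1 + Rabs (sat t2 Q) * wt t2 <= cost Q.
Proof.
  intros Hne. induction Q as [|[c t] Q IH]; intros H; simpl.
  - split. intros; ring. rewrite Rabs_R0. lra.
  - assert (HQ: forall c0 t0, In (c0,t0) Q -> c0 <> 0 -> t0 = t1 \/ t0 = t2) by (intros; apply (H c0 t0); simpl; auto).
    destruct (IH HQ) as [IH1 IH2].
    pose proof (wt_pos t1); pose proof (wt_pos t2); pose proof (wt_pos t).
    destruct (Req_dec c 0) as [Hc|Hc].
    + subst. split.
      * intros x. rewrite IH1. destruct (Req_EM_T t t1); destruct (Req_EM_T t t2); ring.
      * destruct (Req_EM_T t t1); destruct (Req_EM_T t t2); rewrite ?Rplus_0_l, ?Rabs_R0; lra.
    + destruct (H c t (or_introl eq_refl) Hc) as [E|E]; subst.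
      * destruct (Req_EM_T t1 t1) as [_|F]; [|congruence].
        destruct (Req_EM_T t1 t2) as [F|_]; [congruence|].
        split. intros x. rewrite IH1. ring.
        pose proof (Rabs_triang c (sat t1 Q)). rewrite Rplus_0_l. nra.
      * destruct (Req_EM_T t2 t2) as [_|F]; [|congruence].
        destruct (Req_EM_T t2 t1) as [F|_]; [congruence|].
        split. intros x. rewrite IH1. ring.
        pose proof (Rabs_triang c (sat t2 Q)). rewrite Rplus_0_l. nra.
Qed.

Definition kinkfree (l : list atom) p q := forall c s, In (c,s) l -> c <> 0 -> s <= p \/ q <= s.

Lemma kinkfree_cons c s l p q : kinkfree ((c,s)::l) p q -> kinkfree l p q.
Proof. intros H c' s' Hi Hc. apply (H c' s'); simpl; auto. Qed.

Lemma slope_at l p t q : p < t -> t < q -> kinkfree l p t -> kinkfree l t q ->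
  (ev l q - ev l t) * (t - p) - (ev l t - ev l p) * (q - t) = sat t l * (q - t) * (t - p).
Proof.
  intros Hpt Htq. induction l as [|[c s] l IH]; intros H1 H2; simpl. ring.
  specialize (IH (kinkfree_cons _ _ _ _ _ H1) (kinkfree_cons _ _ _ _ _ H2)).
  assert (Hat : c * ((relu (q - s) - relu (t - s)) * (t - p) - (relu (t - s) - relu (p - s)) * (q - t))
     = (if Req_EM_T s t then c else 0) * (q - t) * (t - p)).
  { destruct (Req_dec c 0). subst. destruct (Req_EM_T s t); ring.
    destruct (H1 c s (or_introl eq_refl) H); destruct (H2 c s (or_introl eq_refl) H).
    - destruct (Req_EM_T s t). lra. rewrite !relu_pos by lra. ring.
    - lra.
    - assert (s = t) by lra. subst. destruct (Req_EM_T t t); [|congruence].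
      rewrite relu_pos by lra. rewrite !relu_neg by lra. ring.
    - destruct (Req_EM_T s t). lra. rewrite !relu_neg by lra. ring. }
  lra.
Qed.

Lemma affine_on l p q x : kinkfree l p q -> p <= x <= q ->
  ev l x * (q - p) = (q - x) * ev l p + (x - p) * ev l q.
Proof.
  intros H Hx. induction l as [|[c s] l IH]; simpl. ring.
  specialize (IH (kinkfree_cons _ _ _ _ _ H)).
  assert (Hat : c * relu (x - s) * (q - p) = (q - x) * (c * relu (p - s)) + (x - p) * (c * relu (q - s))).
  { destruct (Req_dec c 0). subst. ring.
    destruct (H c s (or_introl eq_refl) H0).
    - rewrite !relu_pos by lra. ring.
    - rewrite !relu_neg by lra. ring. }
  lra.
Qed.

Lemma Fv_affine l al be p q x : kinkfree l p q -> p <= x <= q ->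
  Fv l al be x * (q - p) = (q - x) * Fv l al be p + (x - p) * Fv l al be q.
Proof. intros. unfold Fv. pose proof (affine_on l p q x H H0). lra. Qed.

Lemma Fv_slope l al be p t q : p < t -> t < q -> kinkfree l p t -> kinkfree l t q ->
  (Fv l al be q - Fv l al be t) * (t - p) - (Fv l al be t - Fv l al be p) * (q - t) = sat t l * (q - t) * (t - p).
Proof. intros. rewrite <- slope_at by auto. unfold Fv. ring. Qed.


Section W2sec.
Variables (n : nat) (xs ys : nat -> R).
Hypothesis Hinc : forall i, (1 <= i < n)%nat -> xs i < xs (S i).
Hypothesis Hx1 : 0 < xs 1%nat.

Lemma cost_decr d1 dl t1 s1 m : 0 < dl -> dl < d1 -> 0 < s1 -> 0 < m ->
  d1 * (t1 - s1) = (d1 - dl) * 0 + dl * (m - s1) ->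
  (d1 - dl) * wt s1 < d1 * wt t1.
Proof.
  intros. pose proof (wt_cs t1 s1). pose proof (wt_pos s1). pose proof (wt_pos t1). pose proof (wt_sq s1) as Ws.
  assert (Hk : (d1 - dl) * (1 + s1*s1) < d1 * (1 + t1*s1)).
  { assert (d1*s1*(t1 - s1) = dl*s1*(m - s1)) by (rewrite Rmult_assoc, (Rmult_comm s1), <- Rmult_assoc, H3; ring).
    assert (0 < dl * (1 + s1*m)) by (apply Rmult_lt_0_compat; nra). lra. }
  assert ((d1 - dl) * wt s1 * wt s1 < d1 * wt t1 * wt s1).
  { rewrite Rmult_assoc, Ws. assert (d1 * (1 + t1*s1) <= d1 * (wt t1 * wt s1)) by (apply Rmult_le_compat_l; lra). lra. }
  nra.
Qed.

Lemma W2 l al be k t1 t2 :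
  opt n xs ys l al be -> (1 <= k)%nat -> (S (S k) <= n)%nat ->
  xs k < t1 < xs (S k) -> xs (S k) < t2 < xs (S (S k)) ->
  (forall c t, In (c,t) l -> c <> 0 -> xs k <= t <= xs (S (S k)) -> t = t1 \/ t = t2) ->
  sat t1 l * sat t2 l < 0 -> False.
Proof.
  intros Hopt Hk Hkn Ht1 Ht2 Hall Hsgn.
  assert (Ha : 0 < xs k) by (apply (xs_pos n xs Hinc Hx1); lia).
  set (a := xs k) in *. set (m := xs (S k)) in *. set (b := xs (S (S k))) in *.
  set (Q := filter (inw a b) l).
  set (E1 := sat t1 l) in *. set (E2 := sat t2 l) in *.
  assert (HE1 : sat t1 Q = E1) by (apply sat_filter; lra).
  assert (HE2 : sat t2 Q = E2) by (apply sat_filter; lra).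
  destruct (two_point Q t1 t2) as [HevQ HcQ]. lra.
  { intros c t Hin Hc. apply filter_In in Hin. destruct Hin as [Hin Hw].
    apply inw_spec in Hw. simpl in Hw. apply (Hall c t Hin Hc Hw). }
  rewrite HE1, HE2 in HevQ, HcQ.
  assert (Heps : exists eps, eps * eps = 1 /\ E1 = eps * Rabs E1 /\ E2 = - eps * Rabs E2).
  { destruct (Rlt_dec 0 E1).
    - exists 1. assert (E2 < 0) by nra. rewrite (Rabs_pos_eq E1) by lra. rewrite (Rabs_left E2) by lra. split; [|split]; ring.
    - exists (-1). assert (E1 < 0) by (destruct (Req_dec E1 0); [rewrite H in Hsgn; lra| lra]).
      assert (0 < E2) by nra. rewrite (Rabs_left E1) by lra. rewrite (Rabs_pos_eq E2) by lra. split; [|split]; ring. }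
  destruct Heps as [eps [Heps [HE1e HE2e]]].
  assert (Hd1 : 0 < Rabs E1) by (apply Rabs_pos_lt; intro E; rewrite E in Hsgn; lra).
  assert (Hd2 : 0 < Rabs E2) by (apply Rabs_pos_lt; intro E; rewrite E in Hsgn; lra).
  set (d1 := Rabs E1) in *. set (d2 := Rabs E2) in *.
  assert (Ham : a < m) by lra. assert (Hmb : m < b) by lra.
  set (dl1 := d1 * (t1 - a) / (m - a)). set (dl2 := d2 * (b - t2) / (b - m)).
  assert (Hdl1 : dl1 * (m - a) = d1 * (t1 - a)) by (unfold dl1; field; lra).
  assert (Hdl2 : dl2 * (b - m) = d2 * (b - t2)) by (unfold dl2; field; lra).
  assert (0 < dl1) by (unfold dl1; apply Rdiv_lt_0_compat; nra).
  assert (0 < dl2) by (unfold dl2; apply Rdiv_lt_0_compat; nra).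
  assert (dl1 < d1) by nra. assert (dl2 < d2) by nra.
  set (dl := Rmin dl1 dl2).
  assert (Hdl_1 : dl <= dl1) by apply Rmin_l. assert (Hdl_2 : dl <= dl2) by apply Rmin_r.
  assert (Hdlp : 0 < dl) by (apply Rmin_pos; auto).
  set (r1 := d1 * (m - t1) / (d1 - dl)). set (r2 := d2 * (t2 - m) / (d2 - dl)).
  assert (Hr1 : r1 * (d1 - dl) = d1 * (m - t1)) by (unfold r1; field; lra).
  assert (Hr2 : r2 * (d2 - dl) = d2 * (t2 - m)) by (unfold r2; field; lra).
  assert (0 < r1) by (unfold r1; apply Rdiv_lt_0_compat; nra).
  assert (0 < r2) by (unfold r2; apply Rdiv_lt_0_compat; nra).
  assert (r1 <= m - a) by nra. assert (r2 <= b - m) by nra.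
  set (s1 := m - r1). set (s2 := m + r2).
  apply (improve_filter n xs ys l al be (inw a b) ((eps * (d1 - dl), s1) :: (- eps * (d2 - dl), s2) :: nil) 0 0 Hopt).
  - intros i Hi. fold Q. rewrite HevQ. simpl.
    destruct (le_lt_dec i k).
    + assert (xs i <= a) by (apply (xs_le n xs Hinc); lia).
      unfold s1, s2. rewrite !relu_neg by lra. ring.
    + destruct (Nat.eq_dec i (S k)).
      * subst i. fold m. unfold s1, s2. rewrite (relu_neg (m - (m + r2))) by lra. rewrite (relu_neg (m - t2)) by lra.
        rewrite !relu_pos by lra. rewrite HE1e.
        assert (eps * ((d1 - dl) * r1) = eps * (d1 * (m - t1))) by (rewrite Rmult_comm in Hr1; rewrite Hr1; ring).
        lra.
      * assert (b <= xs i) by (apply (xs_le n xs Hinc); lia).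
        unfold s1, s2. rewrite !relu_pos by lra. rewrite HE1e, HE2e.
        assert (eps * ((d1 - dl) * r1) = eps * (d1 * (m - t1))) by (rewrite Rmult_comm in Hr1; rewrite Hr1; ring).
        assert (eps * ((d2 - dl) * r2) = eps * (d2 * (t2 - m))) by (rewrite Rmult_comm in Hr2; rewrite Hr2; ring).
        lra.
  - simpl. fold Q.
    assert (Habs : forall u, 0 <= u -> Rabs (eps * u) = u /\ Rabs (- eps * u) = u).
    { intros u Hu. assert (He1 : Rabs eps = 1).
      { destruct (Rle_dec 0 eps). rewrite Rabs_pos_eq by lra. nra. rewrite Rabs_left by lra. nra. }
      rewrite !Rabs_mult, Rabs_Ropp, He1, Rabs_pos_eq by lra. split; ring. }
    destruct (Habs (d1 - dl) ltac:(lra)) as [A1 _]. destruct (Habs (d2 - dl) ltac:(lra)) as [_ A2].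
    rewrite A1, A2.
    assert ((d1 - dl) * wt s1 < d1 * wt t1).
    { apply (cost_decr d1 dl t1 s1 m); try lra; unfold s1; lra. }
    assert ((d2 - dl) * wt s2 < d2 * wt t2).
    { assert (Hq2 : d2 * (t2 - s2) = -(dl * (s2 - m))) by (unfold s2; lra).
      pose proof (wt_cs t2 s2). pose proof (wt_pos s2). pose proof (wt_pos t2). pose proof (wt_sq s2) as Ws.
      assert (Hk2 : (d2 - dl) * (1 + s2*s2) < d2 * (1 + t2*s2)).
      { assert (d2*s2*(t2 - s2) = -(dl*s2*(s2 - m))) by (transitivity (s2 * (d2 * (t2 - s2))); [ring| rewrite Hq2; ring]).
        assert (0 < dl * (1 + s2*m)) by (apply Rmult_lt_0_compat; unfold s2; nra). lra. }
      assert ((d2 - dl) * wt s2 * wt s2 < d2 * wt t2 * wt s2).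
      { rewrite Rmult_assoc, Ws. assert (d2 * (1 + t2*s2) <= d2 * (wt t2 * wt s2)) by (apply Rmult_le_compat_l; lra). lra. }
      nra. }
    lra.
Qed.
End W2sec.


Lemma Rdiv_le_0_compat a b : 0 <= a -> 0 < b -> 0 <= a / b.
Proof. intros. unfold Rdiv. apply Rmult_le_pos; auto. left; apply Rinv_0_lt_compat; auto. Qed.

Section PA.
Variables (n : nat) (xs ys : nat -> R).
Hypothesis Hinc : forall i, (1 <= i < n)%nat -> xs i < xs (S i).
Hypothesis Hx1 : 0 < xs 1%nat.
Hypothesis Hn : (2 <= n)%nat.

Lemma partA l al be : opt n xs ys l al be ->
  forall c t, In (c,t) l -> c <> 0 -> xs 2%nat <= t <= xs (n-1)%nat.
Proof.
  intros Hopt c t Hin Hc.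
  destruct (in_split _ _ Hin) as [l1 [l2 E]]. rewrite E in Hopt.
  assert (H12 : xs 1%nat < xs 2%nat) by (apply Hinc; lia).
  assert (Hn1 : xs (n-1)%nat < xs n) by (replace n with (S (n-1)) at 2 by lia; apply Hinc; lia).
  assert (Hle1 : forall i, (1 <= i <= n)%nat -> xs 1%nat <= xs i) by (intros; apply (xs_le n xs Hinc); lia).
  assert (Hlen : forall i, (1 <= i <= n)%nat -> xs i <= xs n) by (intros; apply (xs_le n xs Hinc); lia).
  pose proof (Rabs_pos_lt c Hc) as Hcp. pose proof (wt_pos t) as Hwt.
  apply NNPP. intro Hnot.
  destruct (Rlt_dec t (xs 2%nat)) as [Hl|Hl].
  - destruct (Rle_dec t (xs 1%nat)) as [Hl1|Hl1].
    + apply (improve_split n xs ys l1 (c,t) l2 al be nil c (-c*t) Hopt).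
      * intros i Hi. simpl. rewrite relu_pos by (specialize (Hle1 i Hi); lra). ring.
      * simpl. nra.
    + set (x1 := xs 1%nat) in *. set (x2 := xs 2%nat) in *.
      set (al' := (x2 - t)/(x2 - x1)). set (be' := (t - x1)/(x2 - x1)).
      apply (improve_split n xs ys l1 (c,t) l2 al be ((c*be', x2)::nil) (c*al') (-(c*al')*x1) Hopt).
      * intros i Hi. simpl. destruct (Nat.eq_dec i 1).
        -- subst i. fold x1. rewrite !relu_neg by lra. ring.
        -- assert (x2 <= xs i) by (apply (xs_le n xs Hinc); lia).
           rewrite !relu_pos by lra. unfold al', be'. field. lra.
      * simpl. rewrite Rabs_mult, (Rabs_pos_eq be') by (unfold be'; apply Rdiv_le_0_compat; lra).
        assert (HX : be' * wt x2 < wt t).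
        { pose proof (wt_cs t x2). pose proof (wt_pos x2). pose proof (wt_sq x2) as W2.
          assert ((t - x1) * wt x2 * wt x2 < (x2 - x1) * wt t * wt x2).
          { rewrite Rmult_assoc, W2.
            assert ((x2 - x1) * (1 + t*x2) <= (x2 - x1) * (wt t * wt x2)) by (apply Rmult_le_compat_l; lra).
            assert (0 < (x2 - t) * (1 + x1*x2)) by (apply Rmult_lt_0_compat; nra). lra. }
          assert ((t - x1) * wt x2 < (x2 - x1) * wt t) by nra.
          unfold be'. apply (Rmult_lt_reg_r (x2 - x1)). lra.
          replace ((t - x1) / (x2 - x1) * wt x2 * (x2 - x1)) with ((t - x1) * wt x2) by (field; lra). lra. }
        nra.
  - assert (t > xs (n-1)%nat) by (apply Rnot_le_lt; intro; apply Hnot; lra).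
    destruct (Rle_dec (xs n) t) as [Hr|Hr].
    + apply (improve_split n xs ys l1 (c,t) l2 al be nil 0 0 Hopt).
      * intros i Hi. simpl. rewrite relu_neg by (specialize (Hlen i Hi); lra). ring.
      * simpl. nra.
    + set (xm := xs (n-1)%nat) in *. set (xn := xs n) in *.
      set (ga := (xn - t)/(xn - xm)).
      apply (improve_split n xs ys l1 (c,t) l2 al be ((c*ga, xm)::nil) 0 0 Hopt).
      * intros i Hi. simpl. destruct (Nat.eq_dec i n).
        -- subst i. fold xn. rewrite !relu_pos by lra. unfold ga. field. lra.
        -- assert (xs i <= xm) by (apply (xs_le n xs Hinc); lia).
           rewrite !relu_neg by lra. ring.
      * simpl. rewrite Rabs_mult, (Rabs_pos_eq ga) by (unfold ga; apply Rdiv_le_0_compat; lra).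
        assert (0 < xm) by (apply (xs_pos n xs Hinc Hx1); lia).
        pose proof (wt_mono xm t ltac:(lra) ltac:(lra)). pose proof (wt_pos xm).
        assert (ga < 1) by (unfold ga; apply (Rmult_lt_reg_r (xn - xm)); [lra|]; 
           replace ((xn - t) / (xn - xm) * (xn - xm)) with (xn - t) by (field; lra); lra).
        assert (0 <= ga) by (unfold ga; apply Rdiv_le_0_compat; lra).
        assert (ga * wt xm < wt t) by nra.
        nra.
Qed.
End PA.


Definition natom (p : R*R*R) : atom * (R*R) :=
  let '(a, w, b) := p in
  match Rlt_dec 0 w with
  | left _ => ((a*w, -b/w), (0, 0))
  | right _ => match Rlt_dec w 0 with
     | left _ => ((-(a*w), -b/w), (a*w, a*b))
     | right _ => ((0, 0), (0, a * relu b))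
     end
  end.

Arguments natom : simpl never.

Definition atoms (th : neurons) : list atom := map (fun p => fst (natom p)) th.
Definition aslope (th : neurons) : R := fold_right (fun p acc => fst (snd (natom p)) + acc) 0 th.
Definition aicpt (th : neurons) : R := fold_right (fun p acc => snd (snd (natom p)) + acc) 0 th.

Lemma natom_eval a w b x :
  a * relu (w*x+b) = fst (fst (natom (a,w,b))) * relu (x - snd (fst (natom (a,w,b))))
     + fst (snd (natom (a,w,b))) * x + snd (snd (natom (a,w,b))).
Proof.
  unfold natom. destruct (Rlt_dec 0 w); simpl.
  - replace (w*x+b) with (w * (x - - b / w)) by (field; lra). rewrite relu_scale by lra. ring.
  - destruct (Rlt_dec w 0); simpl.
    + replace (w*x+b) with ((-w) * (- (x - - b / w))) by (field; lra). rewrite relu_scale by lra.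
      rewrite relu_opp. field. lra.
    + assert (w = 0) by lra. subst. replace (0*x+b) with b by ring. ring.
Qed.

Lemma natom_cost a w b : 2 * (Rabs (fst (fst (natom (a,w,b)))) * wt (snd (fst (natom (a,w,b))))) <= a^2 + w^2 + b^2.
Proof.
  unfold natom.
  assert (Hgen : w <> 0 -> 2 * (Rabs (a*w) * wt (-b/w)) <= a^2 + w^2 + b^2).
  { intro Hw. set (t := -b/w). assert (Hb : b = - w * t) by (unfold t; field; auto).
    pose proof (wt_sq t) as Wt. pose proof (wt_pos t).
    rewrite Rabs_mult. set (A := Rabs a). set (W := Rabs w).
    assert (A*A = a*a) by (unfold A; rewrite <- Rabs_mult; apply Rabs_pos_eq; nra).
    assert (W*W = w*w) by (unfold W; rewrite <- Rabs_mult; apply Rabs_pos_eq; nra).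
    assert (0 <= A) by apply Rabs_pos. assert (0 <= W) by apply Rabs_pos.
    pose proof (sqnn (A - W * wt t)).
    assert (W*wt t*(W*wt t) = w*w*(1+t*t)) by (rewrite <- H1, <- Wt; ring).
    rewrite Hb. simpl. nra. }
  destruct (Rlt_dec 0 w); simpl.
  - apply Hgen; lra.
  - destruct (Rlt_dec w 0); simpl.
    + rewrite Rabs_Ropp. apply Hgen; lra.
    + rewrite Rabs_R0. pose proof (pow2_ge_0 a). pose proof (pow2_ge_0 w). pose proof (pow2_ge_0 b). lra.
Qed.

Lemma net_conv th a0 b0 x : net th a0 b0 x = Fv (atoms th) (aslope th + a0) (aicpt th + b0) x.
Proof.
  unfold net, Fv. induction th as [|[[a w] b] th IH]; simpl.
  - ring.
  - rewrite natom_eval.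
    assert (E : fold_right (fun (p : R * R * R) (acc : R) => let '(a1, w1, b1) := p in a1 * relu (w1 * x + b1) + acc) 0 th
       = ev (atoms th) x + aslope th * x + aicpt th) by lra.
    rewrite E. ring.
Qed.

Lemma sqnorm_conv th : 2 * cost (atoms th) <= sqnorm th.
Proof.
  induction th as [|[[a w] b] th IH]; simpl. lra.
  pose proof (natom_cost a w b). lra.
Qed.

Definition mkneuron (p : atom) : R*R*R :=
  let (c, t) := p in
  match Req_EM_T c 0 with
  | left _ => (0, 0, 0)
  | right _ => let W := sqrt (Rabs c / wt t) in (c / W, W, - t * W)
  end.

Arguments mkneuron : simpl never.

Lemma mk_props c t x :
  (let '(a, w, b) := mkneuron (c,t) in a * relu (w*x+b)) = c * relu (x - t) /\
  (let '(a, w, b) := mkneuron (c,t) in a^2 + w^2 + b^2) = 2 * (Rabs c * wt t).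
Proof.
  unfold mkneuron. destruct (Req_EM_T c 0).
  - subst. rewrite Rabs_R0. split; simpl; ring.
  - pose proof (wt_pos t). pose proof (wt_sq t) as Wt.
    assert (HA : 0 < Rabs c) by (apply Rabs_pos_lt; auto).
    assert (Hq : 0 < Rabs c / wt t) by (apply Rdiv_lt_0_compat; auto).
    set (W := sqrt (Rabs c / wt t)).
    assert (HW : 0 < W) by (apply sqrt_lt_R0; auto).
    assert (HW2 : W * W = Rabs c / wt t) by (apply sqrt_sqrt; lra).
    split.
    + replace (W * x + - t * W) with (W * (x - t)) by ring. rewrite relu_scale by lra. field. lra.
    + assert (Hcc : c * c = Rabs c * Rabs c) by (rewrite <- Rabs_mult; rewrite Rabs_pos_eq; nra).
      simpl.
      replace ((c / W * (c / W * 1)) + W * (W * 1) + - t * W * (- t * W * 1))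
        with (c * c / (W * W) + (W * W) * (1 + t*t)) by (field; lra).
      rewrite HW2, Hcc, <- Wt. field. split; lra.
Qed.

Lemma mk_net l al be x : net (map mkneuron l) al be x = Fv l al be x.
Proof.
  unfold net, Fv. induction l as [|[c t] l IH]; simpl. ring.
  destruct (mk_props c t x) as [H1 _].
  destruct (mkneuron (c,t)) as [[a w] b]. simpl in H1 |- *. rewrite H1.
  assert (E : fold_right (fun (p : R * R * R) (acc : R) => let '(a1, w1, b1) := p in a1 * relu (w1 * x + b1) + acc) 0 (map mkneuron l)
       = ev l x) by lra.
  rewrite E. ring.
Qed.

Lemma mk_sqnorm l : sqnorm (map mkneuron l) = 2 * cost l.
Proof.
  induction l as [|[c t] l IH]; simpl. ring.
  destruct (mk_props c t 0) as [_ H2].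
  destruct (mkneuron (c,t)) as [[a w] b]. simpl in *. rewrite H2, IH. ring.
Qed.

Lemma opt_of_min n xs ys th a0 b0 :
  min_norm_interpolant n xs ys th a0 b0 ->
  opt n xs ys (atoms th) (aslope th + a0) (aicpt th + b0).
Proof.
  intros [Hi Hm]. split.
  - intros i Hi'. rewrite <- net_conv. apply Hi; auto.
  - intros l' al' be' Hi'.
    assert (interpolates n xs ys (map mkneuron l') al' be').
    { intros i Hii. rewrite mk_net. apply Hi'; auto. }
    specialize (Hm _ _ _ H). rewrite mk_sqnorm in Hm. pose proof (sqnorm_conv th). lra.
Qed.


Lemma cancel1 p X : p * X = 0 -> 0 < p -> X = 0.
Proof. intros. destruct (Rmult_integral _ _ H); lra. Qed.
Lemma cancel2 X Y p q : X * p * q = Y * p * q -> 0 < p -> 0 < q -> X = Y.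
Proof. intros. apply Rmult_eq_reg_r with q; [|lra]. apply Rmult_eq_reg_r with p; [|lra]. lra. Qed.

Section Nbr.
Variables (n : nat) (xs ys : nat -> R).
Hypothesis Hinc : forall i, (1 <= i < n)%nat -> xs i < xs (S i).
Hypothesis Hx1 : 0 < xs 1%nat.

Lemma leftN l al be k t0 u up :
  opt n xs ys l al be -> (1 <= k)%nat -> (S (S k) <= n)%nat ->
  xs (S k) < t0 < xs (S (S k)) ->
  (forall c t, In (c,t) l -> c <> 0 -> xs (S k) <= t <= xs (S (S k)) -> t = t0) ->
  Fv l al be t0 = ys (S k) + u * (t0 - xs (S k)) ->
  ys (S (S k)) = Fv l al be t0 + up * (xs (S (S k)) - t0) ->
  exists v d, 0 <= d /\ (ys (S k) - ys k) - u * (xs (S k) - xs k) = (v - u) * d /\ 0 <= (u - v) * (up - u).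
Proof.
  intros Hopt Hk Hkn Ht0 Hall0 Hu Hup.
  pose proof (proj1 Hopt) as Hint.
  assert (Hya' : Fv l al be (xs k) = ys k) by (apply Hint; lia).
  assert (Hya : Fv l al be (xs (S k)) = ys (S k)) by (apply Hint; lia).
  assert (Hyb : Fv l al be (xs (S (S k))) = ys (S (S k))) by (apply Hint; lia).
  assert (Ha'a : xs k < xs (S k)) by (apply Hinc; lia).
  set (F := Fv l al be) in *.
  set (a' := xs k) in *. set (a := xs (S k)) in *. set (b := xs (S (S k))) in *.
  assert (Ka : kinkfree l a t0).
  { intros c s Hin Hc. destruct (Rle_dec s a); [left; auto|]. right. destruct (Rle_dec t0 s); auto.
    exfalso. assert (s = t0) by (apply (Hall0 c s); auto; lra). lra. }
  assert (Kb : kinkfree l t0 b).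
  { intros c s Hin Hc. destruct (Rle_dec b s); [right; auto|]. left. destruct (Rle_dec s t0); auto.
    exfalso. assert (s = t0) by (apply (Hall0 c s); auto; lra). lra. }
  assert (Hsat0 : sat t0 l = up - u).
  { pose proof (Fv_slope l al be a t0 b ltac:(lra) ltac:(lra) Ka Kb). fold F in H.
    apply (cancel2 _ _ (b - t0) (t0 - a)); try lra. rewrite <- H. rewrite Hyb, Hya, Hup, Hu. ring. }
  destruct (classic (exists c t, In (c,t) l /\ c <> 0 /\ a' < t < a)) as [[c1 [t1 [Hin1 [Hc1 Ht1]]]] | Hno].
  - pose proof (W1 n xs ys Hinc Hx1 l al be k c1 t1 Hopt Hk ltac:(lia) Hin1 Hc1 Ht1) as Hall1.
    fold a' a in Hall1.
    assert (K1 : kinkfree l a' t1).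
    { intros c s Hin Hc. destruct (Rle_dec s a'); [left; auto|]. right. destruct (Rle_dec t1 s); auto.
      exfalso. assert (s = t1) by (apply (Hall1 c s); auto; lra). lra. }
    assert (K2 : kinkfree l t1 t0).
    { intros c s Hin Hc. destruct (Rle_dec s t1); [left; auto|]. right. destruct (Rle_dec t0 s); auto.
      exfalso. destruct (Rle_dec s a).
      - assert (s = t1) by (apply (Hall1 c s); auto; lra). lra.
      - assert (s = t0) by (apply (Hall0 c s); auto; lra). lra. }
    pose proof (Fv_affine l al be t1 t0 a K2 ltac:(lra)) as Hmid. fold F in Hmid.
    rewrite Hya in Hmid.
    assert (HF1 : F t1 = ys (S k) - u * (a - t1)).
    { assert ((t0 - a) * (F t1 - ys (S k) + u * (a - t1)) = 0) by (rewrite Hu in Hmid; lra).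
      apply cancel1 in H; lra. }
    set (v := (F t1 - ys k) / (t1 - a')).
    assert (Hv : F t1 = ys k + v * (t1 - a')) by (unfold v; field; lra).
    exists v, (t1 - a'). split; [lra|]. split; [lra|].
    apply Rnot_lt_le. intro Hneg.
    assert (Hsat1 : sat t1 l = u - v).
    { pose proof (Fv_slope l al be a' t1 t0 ltac:(lra) ltac:(lra) K1 K2). fold F in H.
      apply (cancel2 _ _ (t0 - t1) (t1 - a')); try lra. rewrite <- H.
      replace (F t0 - F t1) with (u * (t0 - t1)) by (rewrite Hu, HF1; ring).
      replace (F t1 - F a') with (v * (t1 - a')) by (rewrite Hya', Hv; ring). ring. }
    apply (W2 n xs ys Hinc Hx1 l al be k t1 t0 Hopt Hk Hkn ltac:(fold a' a; lra) ltac:(fold a b; lra)).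
    + intros c t Hin Hc Ht. fold a' b in Ht. destruct (Rle_dec t a).
      * left. apply (Hall1 c t); auto; lra.
      * right. apply (Hall0 c t); auto; lra.
    + rewrite Hsat1, Hsat0. lra.
  - assert (K : kinkfree l a' t0).
    { intros c s Hin Hc. destruct (Rle_dec s a'); [left; auto|]. right. destruct (Rle_dec t0 s); auto.
      exfalso. destruct (Rlt_dec s a).
      - apply Hno. exists c, s. repeat split; auto; lra.
      - assert (s = t0) by (apply (Hall0 c s); auto; lra). lra. }
    pose proof (Fv_affine l al be a' t0 a K ltac:(lra)) as Haff. fold F in Haff.
    rewrite Hya, Hya', Hu in Haff.
    assert (E : (ys (S k) - ys k) - u * (a - a') = 0).
    { assert ((t0 - a) * ((ys (S k) - ys k) - u * (a - a')) = 0) by lra. apply cancel1 in H; lra. }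
    exists u, 0. split; [lra|]. split. rewrite E. ring. replace ((u - u) * (up - u)) with 0 by ring. lra.
Qed.

Lemma rightN l al be k t0 u up :
  opt n xs ys l al be -> (1 <= k)%nat -> (S (S (S k)) <= n)%nat ->
  xs (S k) < t0 < xs (S (S k)) ->
  (forall c t, In (c,t) l -> c <> 0 -> xs (S k) <= t <= xs (S (S k)) -> t = t0) ->
  Fv l al be t0 = ys (S k) + u * (t0 - xs (S k)) ->
  ys (S (S k)) = Fv l al be t0 + up * (xs (S (S k)) - t0) ->
  exists z d, 0 <= d /\ (ys (S (S (S k))) - ys (S (S k))) - up * (xs (S (S (S k))) - xs (S (S k))) = (z - up) * d
     /\ 0 <= (z - up) * (up - u).
Proof.
  intros Hopt Hk Hkn Ht0 Hall0 Hu Hup.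
  pose proof (proj1 Hopt) as Hint.
  assert (Hya : Fv l al be (xs (S k)) = ys (S k)) by (apply Hint; lia).
  assert (Hyb : Fv l al be (xs (S (S k))) = ys (S (S k))) by (apply Hint; lia).
  assert (Hyb' : Fv l al be (xs (S (S (S k)))) = ys (S (S (S k)))) by (apply Hint; lia).
  assert (Hbb' : xs (S (S k)) < xs (S (S (S k)))) by (apply Hinc; lia).
  set (F := Fv l al be) in *.
  set (a := xs (S k)) in *. set (b := xs (S (S k))) in *. set (b' := xs (S (S (S k)))) in *.
  assert (Ka : kinkfree l a t0).
  { intros c s Hin Hc. destruct (Rle_dec s a); [left; auto|]. right. destruct (Rle_dec t0 s); auto.
    exfalso. assert (s = t0) by (apply (Hall0 c s); auto; lra). lra. }
  assert (Kb : kinkfree l t0 b).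
  { intros c s Hin Hc. destruct (Rle_dec b s); [right; auto|]. left. destruct (Rle_dec s t0); auto.
    exfalso. assert (s = t0) by (apply (Hall0 c s); auto; lra). lra. }
  assert (Hsat0 : sat t0 l = up - u).
  { pose proof (Fv_slope l al be a t0 b ltac:(lra) ltac:(lra) Ka Kb). fold F in H.
    apply (cancel2 _ _ (b - t0) (t0 - a)); try lra. rewrite <- H. rewrite Hyb, Hya, Hup, Hu. ring. }
  destruct (classic (exists c t, In (c,t) l /\ c <> 0 /\ b < t < b')) as [[c2 [t2 [Hin2 [Hc2 Ht2]]]] | Hno].
  - pose proof (W1 n xs ys Hinc Hx1 l al be (S (S k)) c2 t2 Hopt ltac:(lia) ltac:(lia) Hin2 Hc2 Ht2) as Hall2.
    fold b b' in Hall2.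
    assert (K3 : kinkfree l t0 t2).
    { intros c s Hin Hc. destruct (Rle_dec s t0); [left; auto|]. right. destruct (Rle_dec t2 s); auto.
      exfalso. destruct (Rle_dec s b).
      - assert (s = t0) by (apply (Hall0 c s); auto; lra). lra.
      - assert (s = t2) by (apply (Hall2 c s); auto; lra). lra. }
    assert (K4 : kinkfree l t2 b').
    { intros c s Hin Hc. destruct (Rle_dec s t2); [left; auto|]. right. destruct (Rle_dec b' s); auto.
      exfalso. assert (s = t2) by (apply (Hall2 c s); auto; lra). lra. }
    pose proof (Fv_affine l al be t0 t2 b K3 ltac:(lra)) as Hmid. fold F in Hmid.
    rewrite Hyb in Hmid.
    assert (HF2 : F t2 = ys (S (S k)) + up * (t2 - b)).
    { assert ((b - t0) * (F t2 - ys (S (S k)) - up * (t2 - b)) = 0) by (rewrite Hup in Hmid |- *; lra).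
      apply cancel1 in H; lra. }
    set (z := (ys (S (S (S k))) - F t2) / (b' - t2)).
    assert (Hz : ys (S (S (S k))) = F t2 + z * (b' - t2)) by (unfold z; field; lra).
    exists z, (b' - t2). split; [lra|]. split; [lra|].
    apply Rnot_lt_le. intro Hneg.
    assert (Hsat2 : sat t2 l = z - up).
    { pose proof (Fv_slope l al be t0 t2 b' ltac:(lra) ltac:(lra) K3 K4). fold F in H.
      apply (cancel2 _ _ (b' - t2) (t2 - t0)); try lra. rewrite <- H.
      replace (F b' - F t2) with (z * (b' - t2)) by (rewrite Hyb', Hz; ring).
      replace (F t2 - F t0) with (up * (t2 - t0)) by (rewrite HF2, Hup; ring). ring. }
    apply (W2 n xs ys Hinc Hx1 l al be (S k) t0 t2 Hopt ltac:(lia) Hkn ltac:(fold a b; lra) ltac:(fold b b'; lra)).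
    + intros c t Hin Hc Ht. fold a b' in Ht. destruct (Rle_dec t b).
      * left. apply (Hall0 c t); auto; lra.
      * right. apply (Hall2 c t); auto; lra.
    + rewrite Hsat2, Hsat0. nra.
  - assert (K : kinkfree l t0 b').
    { intros c s Hin Hc. destruct (Rle_dec s t0); [left; auto|]. right. destruct (Rle_dec b' s); auto.
      exfalso. destruct (Rle_dec s b).
      - assert (s = t0) by (apply (Hall0 c s); auto; lra). lra.
      - apply Hno. exists c, s. repeat split; auto; lra. }
    pose proof (Fv_affine l al be t0 b' b K ltac:(lra)) as Haff. fold F in Haff.
    rewrite Hyb, Hyb' in Haff.
    assert (E : (ys (S (S (S k))) - ys (S (S k))) - up * (b' - b) = 0).
    { assert ((b - t0) * ((ys (S (S (S k))) - ys (S (S k))) - up * (b' - b)) = 0) by (rewrite Hup in Haff |- *; lra).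
      apply cancel1 in H; lra. }
    exists up, 0. split; [lra|]. split. rewrite E. ring. replace ((up - up) * (up - u)) with 0 by ring. lra.
Qed.
End Nbr.


Lemma final_conv v A B C t : B <= v -> C <= v -> v <= A ->
  Rabs (v - t) <= Rmax (Rabs (A - t)) (Rmin (Rabs (B - t)) (Rabs (C - t))).
Proof. intros. destruct (Rle_dec t v).
  - apply Rle_trans with (Rabs (A - t)); [|apply Rmax_l]. rewrite !Rabs_pos_eq by lra. lra.
  - apply Rle_trans with (Rmin (Rabs (B - t)) (Rabs (C - t))); [|apply Rmax_r].
    rewrite (Rabs_left (v - t)) by lra. apply Rmin_glb; rewrite Rabs_left by lra; lra.
Qed.
Lemma final_conc v A B C t : v <= B -> v <= C -> A <= v ->
  Rabs (v - t) <= Rmax (Rabs (A - t)) (Rmin (Rabs (B - t)) (Rabs (C - t))).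
Proof. intros. destruct (Rle_dec v t).
  - apply Rle_trans with (Rabs (A - t)); [|apply Rmax_l]. rewrite !Rabs_left1 by lra. lra.
  - apply Rle_trans with (Rmin (Rabs (B - t)) (Rabs (C - t))); [|apply Rmax_r].
    rewrite (Rabs_pos_eq (v - t)) by lra. apply Rmin_glb; rewrite Rabs_pos_eq by lra; lra.
Qed.

Lemma sign_le p q : 0 < q -> p * q <= 0 -> p <= 0.
Proof. intros. destruct (Rle_dec p 0); auto. assert (0 < p * q) by (apply Rmult_lt_0_compat; lra). lra. Qed.
Lemma sign_ge p q : 0 < q -> 0 <= p * q -> 0 <= p.
Proof. intros. destruct (Rle_dec 0 p); auto. assert (0 < (-p) * q) by (apply Rmult_lt_0_compat; lra). lra. Qed.
Lemma pnn p q : 0 <= p -> 0 <= q -> 0 <= p * q.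
Proof. apply Rmult_le_pos. Qed.

Lemma ev_zero_below l b y : (forall c t, In (c,t) l -> c <> 0 -> b <= t) -> y <= b -> ev l y = 0.
Proof. induction l as [|[c t] l IH]; intros H Hy; simpl. auto.
  rewrite IH; [| intros; apply (H c0 t0); simpl; auto | auto].
  destruct (Req_dec c 0). subst; ring.
  assert (b <= t) by (apply (H c t); simpl; auto). rewrite relu_neg by lra. ring. Qed.

Lemma ev_lin_above l a y : (forall c t, In (c,t) l -> c <> 0 -> t <= a) -> a <= y -> ev l y = S0 l * y - S1 l.
Proof. induction l as [|[c t] l IH]; intros H Hy; simpl. ring.
  rewrite IH; [| intros; apply (H c0 t0); simpl; auto | auto].
  destruct (Req_dec c 0). subst; ring.
  assert (t <= a) by (apply (H c t); simpl; auto). rewrite relu_pos by lra. ring. Qed.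

Theorem lemma8_main (fstar : R -> R) (n : nat) (xs ys : nat -> R)
  (th : neurons) (a0 b0 : R) :
  (2 <= n)%nat ->
  0 < xs 1%nat ->
  (forall i : nat, (1 <= i < n)%nat -> xs i < xs (S i)) ->
  xs n < 1 ->
  min_norm_interpolant n xs ys th a0 b0 ->
  (forall (i : nat) (x : R), (2 <= i <= n - 2)%nat -> xs i <= x < xs (S i) ->
     Rabs (net th a0 b0 x - fstar x) <=
     Rmax (Rabs (gseg xs ys i x - fstar x))
          (Rmin (Rabs (gseg xs ys (S i) x - fstar x))
                (Rabs (gseg xs ys (i - 1) x - fstar x)))) /\
  (forall x : R, 0 <= x < xs 2%nat ->
     Rabs (net th a0 b0 x - fstar x) = Rabs (gseg xs ys 1 x - fstar x)) /\
  (forall x : R, xs (n - 1)%nat <= x <= 1 ->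
     Rabs (net th a0 b0 x - fstar x) = Rabs (gseg xs ys (n - 1) x - fstar x)).
Proof.
  intros Hn Hx1 Hinc Hxn Hmin.
  pose proof (opt_of_min _ _ _ _ _ _ Hmin) as Hopt.
  set (L := atoms th) in *. set (al := aslope th + a0) in *. set (be := aicpt th + b0) in *.
  assert (Hnet : forall x, net th a0 b0 x = Fv L al be x) by (intros; apply net_conv).
  pose proof (proj1 Hopt) as Hint.
  pose proof (partA n xs ys Hinc Hx1 Hn L al be Hopt) as HA.
  assert (H12 : xs 1%nat < xs 2%nat) by (apply Hinc; lia).
  split; [|split].
  - intros i x Hi Hx. rewrite Hnet.
    destruct i as [|k]; [lia|]. replace (S k - 1)%nat with k by lia.
    assert (Hk : (1 <= k)%nat) by lia. assert (Hkn : (S (S (S k)) <= n)%nat) by lia.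
    assert (Hy0 : Fv L al be (xs k) = ys k) by (apply Hint; lia).
    assert (Hy1 : Fv L al be (xs (S k)) = ys (S k)) by (apply Hint; lia).
    assert (Hy2 : Fv L al be (xs (S (S k))) = ys (S (S k))) by (apply Hint; lia).
    assert (Hx01 : xs k < xs (S k)) by (apply Hinc; lia).
    assert (Hx12 : xs (S k) < xs (S (S k))) by (apply Hinc; lia).
    assert (Hx23 : xs (S (S k)) < xs (S (S (S k)))) by (apply Hinc; lia).
    unfold gseg.
    set (F := Fv L al be) in *.
    set (a' := xs k) in *. set (a := xs (S k)) in *. set (b := xs (S (S k))) in *.
    set (b' := xs (S (S (S k)))) in *.
    set (y0 := ys k) in *. set (y1 := ys (S k)) in *. set (y2 := ys (S (S k))) in *.
    set (y3 := ys (S (S (S k)))) in *.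
    set (sL := (y1 - y0) / (a - a')). set (sM := (y2 - y1) / (b - a)). set (sR := (y3 - y2) / (b' - b)).
    assert (HsL : sL * (a - a') = y1 - y0) by (unfold sL; field; lra).
    assert (HsM : sM * (b - a) = y2 - y1) by (unfold sM; field; lra).
    assert (HsR : sR * (b' - b) = y3 - y2) by (unfold sR; field; lra).
    assert (EC : y0 + sL * (x - a') = y1 + sL * (x - a)) by lra.
    rewrite EC.
    destruct (classic (exists c t, In (c,t) L /\ c <> 0 /\ a < t < b)) as [[c0 [t0 [Hin0 [Hc0 Ht0]]]] | Hno].
    + pose proof (W1 n xs ys Hinc Hx1 L al be (S k) c0 t0 Hopt ltac:(lia) ltac:(lia) Hin0 Hc0 Ht0) as Hall0.
      fold a b in Hall0.
      set (u := (F t0 - y1) / (t0 - a)). set (up := (y2 - F t0) / (b - t0)).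
      assert (Hu : F t0 = y1 + u * (t0 - a)) by (unfold u; field; lra).
      assert (Hup : y2 = F t0 + up * (b - t0)) by (unfold up; field; lra).
      destruct (leftN n xs ys Hinc Hx1 L al be k t0 u up Hopt Hk ltac:(lia) Ht0 Hall0 Hu Hup)
        as [v [d [Hd [Hl Hlp]]]].
      destruct (rightN n xs ys Hinc Hx1 L al be k t0 u up Hopt Hk Hkn Ht0 Hall0 Hu Hup)
        as [z [d' [Hd' [Hr Hrp]]]].
      fold y0 y1 a a' in Hl. fold y2 y3 b b' in Hr.
      assert (Ka : kinkfree L a t0).
      { intros c s Hin Hc. destruct (Rle_dec s a); [left; auto|]. right. destruct (Rle_dec t0 s); auto.
        exfalso. assert (s = t0) by (apply (Hall0 c s); auto; lra). lra. }
      assert (Kb : kinkfree L t0 b).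
      { intros c s Hin Hc. destruct (Rle_dec b s); [right; auto|]. left. destruct (Rle_dec s t0); auto.
        exfalso. assert (s = t0) by (apply (Hall0 c s); auto; lra). lra. }
      assert (HFl : forall y, a <= y <= t0 -> F y = y1 + u * (y - a)).
      { intros y Hy. pose proof (Fv_affine L al be a t0 y Ka Hy) as E. fold F in E.
        rewrite Hy1, Hu in E.
        assert ((t0 - a) * (F y - y1 - u * (y - a)) = 0) by lra. apply cancel1 in H; lra. }
      assert (HFr : forall y, t0 <= y <= b -> F y = y2 + up * (y - b)).
      { intros y Hy. pose proof (Fv_affine L al be t0 b y Kb Hy) as E. fold F in E.
        rewrite Hy2 in E. rewrite Hup in E |- *.
        assert ((b - t0) * (F y - (F t0 + up * (b - t0)) - up * (y - b)) = 0) by lra. apply cancel1 in H; lra. }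
      assert (HM : sM * (b - a) = u * (t0 - a) + up * (b - t0)) by lra.
      assert (EA : y1 + sM * (x - a) = y2 + sM * (x - b)) by lra.
      destruct (total_order_T u up) as [[Hlt|Heq]|Hgt].
      * assert (Huv : 0 <= u - v) by (apply (sign_ge _ (up - u)); lra).
        assert (Hzu : 0 <= z - up) by (apply (sign_ge _ (up - u)); lra).
        assert (HsLu : sL - u <= 0).
        { apply (sign_le _ (a - a')). lra. pose proof (pnn (u - v) d Huv Hd). lra. }
        assert (HsRu : 0 <= sR - up).
        { apply (sign_ge _ (b' - b)). lra. pose proof (pnn (z - up) d' Hzu Hd'). lra. }
        assert (HsM1 : 0 <= sM - u).
        { apply (sign_ge _ (b - a)). lra. pose proof (pnn (up - u) (b - t0) ltac:(lra) ltac:(lra)). lra. }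
        assert (HsM2 : 0 <= up - sM).
        { apply (sign_ge _ (b - a)). lra. pose proof (pnn (up - u) (t0 - a) ltac:(lra) ltac:(lra)). lra. }
        apply final_conv.
        --
           pose proof (pnn (sR - up) (b - x) HsRu ltac:(lra)).
           destruct (Rle_dec x t0).
           ++ rewrite (HFl x) by lra. pose proof (pnn (up - u) (t0 - x) ltac:(lra) ltac:(lra)). lra.
           ++ rewrite (HFr x) by lra. lra.
        --
           pose proof (pnn (u - sL) (x - a) ltac:(lra) ltac:(lra)).
           destruct (Rle_dec x t0).
           ++ rewrite (HFl x) by lra. lra.
           ++ rewrite (HFr x) by lra. pose proof (pnn (up - u) (x - t0) ltac:(lra) ltac:(lra)). lra.
        --
           destruct (Rle_dec x t0).
           ++ rewrite (HFl x) by lra. pose proof (pnn (sM - u) (x - a) ltac:(lra) ltac:(lra)). lra.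
           ++ rewrite (HFr x) by lra. pose proof (pnn (up - sM) (b - x) ltac:(lra) ltac:(lra)). lra.
      * rewrite <- Heq in HM, HFr.
        assert (HsMu : sM = u).
        { assert ((b - a) * (sM - u) = 0) by lra. apply cancel1 in H; lra. }
        assert (F x = y1 + sM * (x - a)).
        { destruct (Rle_dec x t0).
          - rewrite (HFl x) by lra. rewrite HsMu. ring.
          - rewrite (HFr x) by lra. rewrite HsMu. lra. }
        rewrite H. apply Rmax_l.
      * assert (Huv : u - v <= 0) by (apply (sign_le _ (u - up)); lra).
        assert (Hzu : z - up <= 0) by (apply (sign_le _ (u - up)); lra).
        assert (HsLu : 0 <= sL - u).
        { apply (sign_ge _ (a - a')). lra. pose proof (pnn (v - u) d ltac:(lra) Hd). lra. }
        assert (HsRu : sR - up <= 0).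
        { apply (sign_le _ (b' - b)). lra. pose proof (pnn (up - z) d' ltac:(lra) Hd'). lra. }
        assert (HsM1 : sM - u <= 0).
        { apply (sign_le _ (b - a)). lra. pose proof (pnn (u - up) (b - t0) ltac:(lra) ltac:(lra)). lra. }
        assert (HsM2 : up - sM <= 0).
        { apply (sign_le _ (b - a)). lra. pose proof (pnn (u - up) (t0 - a) ltac:(lra) ltac:(lra)). lra. }
        apply final_conc.
        -- pose proof (pnn (up - sR) (b - x) ltac:(lra) ltac:(lra)).
           destruct (Rle_dec x t0).
           ++ rewrite (HFl x) by lra. pose proof (pnn (u - up) (t0 - x) ltac:(lra) ltac:(lra)). lra.
           ++ rewrite (HFr x) by lra. lra.
        -- pose proof (pnn (sL - u) (x - a) ltac:(lra) ltac:(lra)).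
           destruct (Rle_dec x t0).
           ++ rewrite (HFl x) by lra. lra.
           ++ rewrite (HFr x) by lra. pose proof (pnn (u - up) (x - t0) ltac:(lra) ltac:(lra)). lra.
        -- destruct (Rle_dec x t0).
           ++ rewrite (HFl x) by lra. pose proof (pnn (u - sM) (x - a) ltac:(lra) ltac:(lra)). lra.
           ++ rewrite (HFr x) by lra. pose proof (pnn (sM - up) (b - x) ltac:(lra) ltac:(lra)). lra.
    + assert (K : kinkfree L a b).
      { intros c s Hin Hc. destruct (Rle_dec s a); [left; auto|]. right. destruct (Rle_dec b s); auto.
        exfalso. apply Hno. exists c, s. repeat split; auto; lra. }
      pose proof (Fv_affine L al be a b x K ltac:(lra)) as E. fold F in E. rewrite Hy1, Hy2 in E.
      assert (F x = y1 + sM * (x - a)).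
      { assert (sM * (b - a) * (x - a) = (y2 - y1) * (x - a)) by (rewrite HsM; ring).
        assert ((b - a) * (F x - (y1 + sM * (x - a))) = 0) by lra. apply cancel1 in H0; lra. }
      rewrite H. apply Rmax_l.
  - intros x [Hx0 Hx2]. rewrite Hnet.
    assert (Hz : forall y, y <= xs 2%nat -> Fv L al be y = al * y + be).
    { intros y Hy. unfold Fv. rewrite (ev_zero_below L (xs 2%nat)); [ring | | auto].
      intros c t Hin Hc. apply (HA c t Hin Hc). }
    assert (E1 : ys 1%nat = al * xs 1%nat + be) by (rewrite <- (Hint 1%nat) by lia; apply Hz; lra).
    assert (E2 : ys 2%nat = al * xs 2%nat + be) by (rewrite <- (Hint 2%nat) by lia; apply Hz; lra).
    rewrite Hz by lra. unfold gseg. rewrite E1, E2.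
    replace (al * xs 1%nat + be + (al * xs 2%nat + be - (al * xs 1%nat + be)) / (xs 2%nat - xs 1%nat) * (x - xs 1%nat))
      with (al * x + be) by (field; lra). reflexivity.
  - intros x [Hx Hx1']. rewrite Hnet.
    assert (Hn1 : xs (n-1)%nat < xs n) by (replace n with (S (n-1)) at 2 by lia; apply Hinc; lia).
    assert (Hz : forall y, xs (n-1)%nat <= y -> Fv L al be y = (al + S0 L) * y + (be - S1 L)).
    { intros y Hy. unfold Fv. rewrite (ev_lin_above L (xs (n-1)%nat)); [ring | | auto].
      intros c t Hin Hc. apply (HA c t Hin Hc). }
    assert (E1 : ys (n-1)%nat = (al + S0 L) * xs (n-1)%nat + (be - S1 L))
      by (rewrite <- (Hint (n-1)%nat) by lia; apply Hz; lra).
    assert (E2 : ys n = (al + S0 L) * xs n + (be - S1 L))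
      by (rewrite <- (Hint n) by lia; apply Hz; lra).
    rewrite Hz by lra. unfold gseg. replace (S (n-1)) with n by lia. rewrite E1, E2.
    f_equal. f_equal. field. lra.
Qed.

Theorem lemma8 (fstar : R -> R) (n : nat) (xs ys : nat -> R)
  (th : neurons) (a0 b0 : R) :
  (2 <= n)%nat ->
  0 < xs 1%nat ->
  (forall i : nat, (1 <= i < n)%nat -> xs i < xs (S i)) ->
  xs n < 1 ->
  min_norm_interpolant n xs ys th a0 b0 ->
  (forall (i : nat) (x : R), (2 <= i <= n - 2)%nat -> xs i <= x < xs (S i) ->
     Rabs (net th a0 b0 x - fstar x) <=
     Rmax (Rabs (gseg xs ys i x - fstar x))
          (Rmin (Rabs (gseg xs ys (S i) x - fstar x))
                (Rabs (gseg xs ys (i - 1) x - fstar x)))) /\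
  (forall x : R, 0 <= x < xs 2%nat ->
     Rabs (net th a0 b0 x - fstar x) = Rabs (gseg xs ys 1 x - fstar x)) /\
  (forall x : R, xs (n - 1)%nat <= x <= 1 ->
     Rabs (net th a0 b0 x - fstar x) = Rabs (gseg xs ys (n - 1) x - fstar x)).
Proof.
  exact (lemma8_main fstar n xs ys th a0 b0).
Qed.
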